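(* Let $f:\mathcal{M}_1\to\mathcal{M}$ be a partial self-covering with $\mathcal{M}$ path connected, and consider $\mathrm{IMG}(f)$ as a self-similar group with respect to a standard action on $X^*$. Then the conjugate $\Lambda^{-1}\mathcal{V}_f\Lambda$ of $\mathcal{V}_f$ (acting on $X^\omega$ via the induced homeomorphism $\Lambda:X^\omega\to\partial T_t$) equals $\mathcal{V}_{\mathrm{IMG}(f)}$.
   Context: A partial self-covering is a finite degree covering $f:\mathcal{M}_1\to\mathcal{M}$ with $\mathcal{M}_1\subseteq\mathcal{M}$; iterates $f^n:\mathcal{M}_n\to\mathcal{M}$, $\mathcal{M}_{n+1}=f^{-1}(\mathcal{M}_n)$. For $t\in\mathcal{M}$, $T_t$ is the tree with vertices $\bigsqcup_{n\ge0}f^{-n}(t)$, $v$ joined to $f(v)$; for a path $\gamma$ from vertex $v$ to vertex $u$, $S_\gamma:\partial T_v\to\partial T_u$ is induced by sending $z\in f^{-k}(v)$ to the end of the lift of $\gamma$ by $f^k$ from $z$; $\mathcal{V}_f$ is the group of homeomorphisms $g$ of $\partial T_t$ for which there exist vertices $v_1,\dots,v_n$ with $\partial T_t=\bigsqcup\partial T_{v_i}$ and paths $\gamma_i$ from $v_i$ with $g=S_{\gamma_i}$ on $\partial T_{v_i}$. $\mathrm{IMG}(f)$ is the group of automorphisms $S_\gamma$ of $T_t$ for loops $\gamma$ at $t$. Standard action: with $f^{-1}(t)=\{t_1,\ldots,t_d\}$, $X=\{1,\ldots,d\}$ and chosen paths $\ell_i$ from $t$ to $t_i$, $\Lambda:X^*\to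 T_t$ is given by $\Lambda(\varnothing)=t$, $\Lambda(x_1\ldots x_n)=$ end of the lift of $\ell_{x_1}$ by $f^{n-1}$ starting at $\Lambda(x_2\ldots x_n)$; it is a rooted-tree isomorphism ($X^*$ with $v$ joined to $vx$) and induces a homeomorphism $X^\omega\to\partial T_t$; conjugating by it gives a self-similar action of $\mathrm{IMG}(f)$ on $X^*$. For a self-similar group $(G,X)$, $\mathcal{V}_G$ is the group of homeomorphisms $g$ of $X^\omega$ for which there exist complete antichains $A_1,A_2$ (finite sets of words, none a prefix of another, with $X^\omega=\bigsqcup_{v\in A_i}vX^\omega$), a bijection $\alpha:A_1\to A_2$ and $g_v\in G$ with $g(vw)=\alpha(v)g_v(w)$. *)

(* Defs.v *)
From Stdlib Require Import Reals List Arith ClassicalEpsilon.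
Import ListNotations.

Set Implicit Arguments.

Record Topology (T : Type) := {
  open : (T -> Prop) -> Prop;
  open_full : open (fun _ => True);
  open_inter : forall U V, open U -> open V -> open (fun x => U x /\ V x);
  open_union : forall (I : Type) (F : I -> T -> Prop),
      (forall i, open (F i)) -> open (fun x => exists i, F i x)
}.

Definition rel_open {T} (tau : Topology T) (S W : T -> Prop) : Prop :=
  exists U, open tau U /\ forall x, W x <-> (S x /\ U x).

Definition cont_on {T} (tau : Topology T) (S : T -> Prop) (f : T -> T) : Prop :=
  forall V, open tau V -> rel_open tau S (fun x => S x /\ V (f x)).

Definition is_path {T} (tau : Topology T) (S : T -> Prop) (g : R -> T) : Prop :=
  (forall s, (0 <= s <= 1)%R -> S (g s)) /\
  (forall V, open tau V -> forall s, (0 <= s <= 1)%R -> V (g s) ->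
     exists eps, (eps > 0)%R /\
       forall s', (0 <= s' <= 1)%R -> (Rabs (s' - s) < eps)%R -> V (g s')).

Definition path_connected {T} (tau : Topology T) : Prop :=
  forall x y, exists g, is_path tau (fun _ => True) g /\ g 0%R = x /\ g 1%R = y.

(* f : M1 -> M is a finite degree covering map, M1 a subset of M
   (with the subspace topology); f is given as a function on M whose
   values outside M1 are irrelevant. *)
Definition partial_self_covering {M} (tau : Topology M) (M1 : M -> Prop)
  (f : M -> M) : Prop :=
  cont_on tau M1 f /\
  (* every point has an evenly covered open neighbourhood *)
  (forall x, exists U, open tau U /\ U x /\
     exists (I : Type) (W : I -> M -> Prop),
       (forall i, rel_open tau M1 (W i) /\ (forall y, W i y -> M1 y)) /\
       (forall y, M1 y -> (U (f y) <-> exists i, W i y)) /\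
       (forall i j y, W i y -> W j y -> i = j) /\
       (forall i, (forall y, W i y -> U (f y)) /\
                  (forall u, U u -> exists y, W i y /\ f y = u) /\
                  (forall y y', W i y -> W i y' -> f y = f y' -> y = y') /\
                  (* the inverse of f|W_i is continuous, i.e. f|W_i is open *)
                  (forall V, rel_open tau (W i) V ->
                     rel_open tau U (fun u => exists y, V y /\ f y = u)))) /\
  (* finite degree *)
  (forall x, exists l : list M, forall y, (M1 y /\ f y = x) <-> In y l).

Fixpoint Mn {M} (M1 : M -> Prop) (f : M -> M) (n : nat) (x : M) : Prop :=
  match n with
  | 0 => True
  | S n' => M1 x /\ Mn M1 f n' (f x)
  end.

Definition Lift {M} (tau : Topology M) (M1 : M -> Prop) (f : M -> M)
  (k : nat) (g : R -> M) (z w : M) : Prop :=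
  exists dl : R -> M, is_path tau (Mn M1 f k) dl /\
    (forall s, (0 <= s <= 1)%R -> Nat.iter k f (dl s) = g s) /\
    dl 0%R = z /\ dl 1%R = w.

(* the (unique, by the path lifting property) endpoint of that lift *)
Definition liftEnd {M} (tau : Topology M) (M1 : M -> Prop) (f : M -> M)
  (k : nat) (g : R -> M) (z : M) : M :=
  epsilon (inhabits z) (Lift tau M1 f k g z).

(* vertex (n, v) of T_t : v in f^{-n}(t) *)
Definition is_vertex {M} (M1 : M -> Prop) (f : M -> M) (t : M) (n : nat) (v : M) :=
  Mn M1 f n v /\ Nat.iter n f v = t.

(* ends of T_t (points of the boundary), as sequences of vertices *)
Definition is_end {M} (M1 : M -> Prop) (f : M -> M) (t : M) (xi : nat -> M) :=
  xi 0 = t /\ forall k, M1 (xi (S k)) /\ f (xi (S k)) = xi k.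

Definition in_subtree_bd {M} (M1 : M -> Prop) (f : M -> M) (t : M)
  (n : nat) (v : M) (xi : nat -> M) :=
  is_end M1 f t xi /\ xi n = v.

(* S_gamma : boundary of T_(n,v) -> boundary of T_(m,u), gamma a path from v to u *)
Definition S_path {M} (tau : Topology M) (M1 : M -> Prop) (f : M -> M)
  (n m : nat) (u : M) (g : R -> M) (xi : nat -> M) : nat -> M :=
  fun j => if j <? m then Nat.iter (m - j) f u
           else liftEnd tau M1 f (j - m) g (xi (n + (j - m))).

Definition seq_cont {A} (D : (nat -> A) -> Prop) (g : (nat -> A) -> (nat -> A)) :=
  forall w, D w -> forall n, exists m, forall w', D w' ->
    (forall i, i < m -> w' i = w i) -> forall i, i < n -> g w' i = g w i.

Definition homeo_on {A} (D : (nat -> A) -> Prop) (g : (nat -> A) -> (nat -> A)) :=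
  (forall x, D x -> D (g x)) /\
  exists h, (forall x, D x -> D (h x)) /\
    (forall x, D x -> forall n, h (g x) n = x n) /\
    (forall x, D x -> forall n, g (h x) n = x n) /\
    seq_cont D g /\ seq_cont D h.

Record Piece (M : Type) := mkPiece {
  p_n : nat; p_v : M; p_m : nat; p_u : M; p_g : R -> M }.

Definition in_Vf {M} (tau : Topology M) (M1 : M -> Prop) (f : M -> M) (t : M)
  (h : (nat -> M) -> (nat -> M)) : Prop :=
  homeo_on (is_end M1 f t) h /\
  exists (k : nat) (P : nat -> Piece M),
    (forall i, i < k ->
       is_vertex M1 f t (p_n (P i)) (p_v (P i)) /\
       is_vertex M1 f t (p_m (P i)) (p_u (P i)) /\
       is_path tau (fun _ => True) (p_g (P i)) /\
       p_g (P i) 0%R = p_v (P i) /\ p_g (P i) 1%R = p_u (P i)) /\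
    (forall xi, is_end M1 f t xi ->
       exists i, i < k /\ in_subtree_bd M1 f t (p_n (P i)) (p_v (P i)) xi /\
         forall j, j < k -> in_subtree_bd M1 f t (p_n (P j)) (p_v (P j)) xi -> j = i) /\
    (forall i, i < k -> forall xi,
       in_subtree_bd M1 f t (p_n (P i)) (p_v (P i)) xi ->
       forall j, h xi j = S_path tau M1 f (p_n (P i)) (p_m (P i)) (p_u (P i)) (p_g (P i)) xi j).

Definition X (d : nat) := {i : nat | i < d}.

Fixpoint Lam {M} (tau : Topology M) (M1 : M -> Prop) (f : M -> M) (t : M)
  {d} (ell : X d -> R -> M) (w : list (X d)) : M :=
  match w with
  | [] => t
  | x :: rest => liftEnd tau M1 f (length rest) (ell x) (Lam tau M1 f t ell rest)
  end.

Definition LamInf {M} (tau : Topology M) (M1 : M -> Prop) (f : M -> M) (t : M)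
  {d} (ell : X d -> R -> M) (w : nat -> X d) : nat -> M :=
  fun n => Lam tau M1 f t ell (map w (seq 0 n)).

Fixpoint prepend {A} (v : list A) (w : nat -> A) : nat -> A :=
  match v with
  | [] => w
  | x :: v' => fun n => match n with 0 => x | S n' => prepend v' w n' end
  end.

Definition word_prefix {A} (v v' : list A) := exists r, v' = v ++ r.

Definition inf_prefix {A} (v : list A) (w : nat -> A) :=
  forall i, i < length v -> nth_error v i = Some (w i).

Definition complete_antichain {A} (Ac : list (list A)) :=
  (forall v v', In v Ac -> In v' Ac -> v <> v' -> ~ word_prefix v v') /\
  (forall w, exists v, In v Ac /\ inf_prefix v w).

(* g_v in IMG(f): the element of IMG(f) given by a loop gamma at t,
   acting on X^omega as Lambda^{-1} S_gamma Lambda *)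
Definition in_VIMG {M} (tau : Topology M) (M1 : M -> Prop) (f : M -> M) (t : M)
  {d} (ell : X d -> R -> M) (g : (nat -> X d) -> (nat -> X d)) : Prop :=
  homeo_on (fun _ => True) g /\
  exists (A1 A2 : list (list (X d))) (alpha : list (X d) -> list (X d)),
    complete_antichain A1 /\ complete_antichain A2 /\
    (forall v, In v A1 -> In (alpha v) A2) /\
    (forall v v', In v A1 -> In v' A1 -> alpha v = alpha v' -> v = v') /\
    (forall u, In u A2 -> exists v, In v A1 /\ alpha v = u) /\
    (forall v, In v A1 -> exists gam : R -> M,
       is_path tau (fun _ => True) gam /\ gam 0%R = t /\ gam 1%R = t /\
       forall w, exists z,
         (forall n, g (prepend v w) n = prepend (alpha v) z n) /\
         (forall n, LamInf tau M1 f t ell z n =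
                    S_path tau M1 f 0 0 t gam (LamInf tau M1 f t ell w) n)).

(* Main.v *)
Require Import Defs.
From Stdlib Require Import Reals List Arith ClassicalEpsilon.
From Stdlib Require Import Lra Lia Classical FunctionalExtensionality.
Import ListNotations.

Module Helpers.
Open Scope R_scope.
Lemma real_ind (Q : R -> Prop) :
  (forall s, 0<=s<=1 -> (forall s', 0<=s'<s -> Q s') ->
     exists eps, eps>0 /\ forall s', 0<=s'<=1 -> s'<s+eps -> Q s') ->
  forall s, 0<=s<=1 -> Q s.
Proof.
  intros H.
  set (E := fun x => 0<=x<=1 /\ forall s', 0<=s'<x -> Q s').
  assert (Hb : bound E) by (exists 1; intros x [Hx _]; lra).
  assert (He : exists x, E x) by (exists 0; split; [lra| intros; lra]).
  destruct (completeness E Hb He) as [m [Hub Hlub]].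
  assert (H0m : 0 <= m) by (apply Hub; split; [lra| intros; lra]).
  assert (Hm1 : m <= 1) by (apply Hlub; intros x [Hx _]; lra).
  assert (Hbelow : forall s', 0<=s'<m -> Q s').
  { intros s' Hs'. destruct (classic (exists x, E x /\ s' < x)) as [[x [[_ Hx] Hsx]]|Hn].
    - apply Hx; lra.
    - exfalso. assert (m <= s'); [|lra]. apply Hlub. intros x Ex.
      destruct (Rle_or_lt x s'); auto. exfalso; apply Hn; eauto. }
  destruct (H m (conj H0m Hm1) Hbelow) as [eps [Heps HQ]].
  assert (Hm : m = 1).
  { destruct (Req_dec m 1); auto. exfalso.
    assert (E (Rmin (m + eps/2) 1)).
    { split. split. unfold Rmin; destruct Rle_dec; lra. apply Rmin_r.
      intros s' Hs'. apply HQ. split. lra. assert (Rmin (m+eps/2) 1 <= 1) by apply Rmin_r; lra.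
      assert (Rmin (m+eps/2) 1 <= m+eps/2) by apply Rmin_l; lra. }
    apply Hub in H1. unfold Rmin in H1; destruct Rle_dec in H1; lra. }
  intros s Hs. apply HQ; lra.
Qed.

Set Implicit Arguments.
Section Paths.
Variables (M : Type) (tau : Topology M).

Definition pcont (a b : R) (g : R -> M) :=
  forall V, open tau V -> forall s, a <= s <= b -> V (g s) ->
     exists eps, eps > 0 /\ forall s', a <= s' <= b -> Rabs (s' - s) < eps -> V (g s').

Lemma is_path_iff S g : is_path tau S g <-> (forall s, 0<=s<=1 -> S (g s)) /\ pcont 0 1 g.
Proof. unfold is_path, pcont. tauto. Qed.

Lemma is_path_weaken S S' g : (forall x, S x -> S' x) -> is_path tau S g -> is_path tau S' g.
Proof. intros H [H1 H2]; split; auto. Qed.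

Lemma is_path_ext S g g' : (forall s, 0<=s<=1 -> g s = g' s) -> is_path tau S g -> is_path tau S g'.
Proof.
  intros He [H1 H2]; split.
  - intros s Hs; rewrite <- He; auto.
  - intros V HV s Hs HVs. rewrite <- He in HVs by auto.
    destruct (H2 V HV s Hs HVs) as [eps [Heps Hc]]. exists eps; split; auto.
    intros s' Hs' Hd. rewrite <- He; auto.
Qed.

Definition cpath (x : M) : R -> M := fun _ => x.
Lemma is_path_const S x : S x -> is_path tau S (cpath x).
Proof. intros Hx; split; unfold cpath; auto. intros V HV s Hs HVs; exists 1; split; auto; lra. Qed.

Definition rpath (g : R -> M) : R -> M := fun s => g (1 - s).
Lemma is_path_rev S g : is_path tau S g -> is_path tau S (rpath g).
Proof.
  intros [H1 H2]; split; unfold rpath.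
  - intros s Hs; apply H1; lra.
  - intros V HV s Hs HVs. destruct (H2 V HV (1-s) ltac:(lra) HVs) as [eps [Heps Hc]].
    exists eps; split; auto. intros s' Hs' Hd. apply Hc. lra.
    replace (1 - s' - (1 - s)) with (-(s'-s)) by ring. rewrite Rabs_Ropp; auto.
Qed.

Definition ppath (g1 g2 : R -> M) : R -> M :=
  fun s => if Rle_dec s (1/2) then g1 (2*s) else g2 (2*s-1).

Lemma ppath_l g1 g2 s : s <= 1/2 -> ppath g1 g2 s = g1 (2*s).
Proof. intros; unfold ppath; destruct Rle_dec; auto; lra. Qed.
Lemma ppath_r g1 g2 s : s > 1/2 -> ppath g1 g2 s = g2 (2*s-1).
Proof. intros; unfold ppath; destruct Rle_dec; auto; lra. Qed.

Lemma Rabs_lt_iff a b : Rabs a < b <-> - b < a < b.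
Proof. split. intros H; split; [apply Rabs_def2 in H|apply Rabs_def2 in H]; lra.
  intros [H1 H2]; apply Rabs_def1; lra. Qed.

Lemma is_path_cat S g1 g2 : is_path tau S g1 -> is_path tau S g2 -> g1 1 = g2 0 ->
  is_path tau S (ppath g1 g2).
Proof.
  intros [A1 C1] [A2 C2] E; split.
  - intros s Hs. unfold ppath; destruct Rle_dec; [apply A1|apply A2]; lra.
  - intros V HV s Hs HVs.
    destruct (Rlt_or_le s (1/2)) as [Hl|Hl]; [|destruct (Rle_lt_or_eq_dec _ _ Hl) as [Hr|Hr]].
    + rewrite ppath_l in HVs by lra.
      destruct (C1 V HV (2*s) ltac:(lra) HVs) as [e [He Hc]].
      exists (Rmin (e/2) (1/2 - s)). split. apply Rmin_pos; lra.
      intros s' Hs' Hd. pose proof (Rmin_l (e/2) (1/2-s)). pose proof (Rmin_r (e/2) (1/2-s)).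
      apply Rabs_lt_iff in Hd. rewrite ppath_l by lra. apply Hc. lra. apply Rabs_lt_iff; lra.
    + rewrite ppath_r in HVs by lra.
      destruct (C2 V HV (2*s-1) ltac:(lra) HVs) as [e [He Hc]].
      exists (Rmin (e/2) (s - 1/2)). split. apply Rmin_pos; lra.
      intros s' Hs' Hd. pose proof (Rmin_l (e/2) (s-1/2)). pose proof (Rmin_r (e/2) (s-1/2)).
      apply Rabs_lt_iff in Hd. rewrite ppath_r by lra. apply Hc. lra. apply Rabs_lt_iff; lra.
    + subst s. rewrite ppath_l in HVs by lra. replace (2*(1/2)) with 1 in HVs by field.
      destruct (C1 V HV 1 ltac:(lra) HVs) as [e1 [He1 Hc1]].
      rewrite E in HVs.
      destruct (C2 V HV 0 ltac:(lra) HVs) as [e2 [He2 Hc2]].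
      exists (Rmin e1 e2 / 2). split. pose proof (Rmin_pos _ _ He1 He2); lra.
      intros s' Hs' Hd. pose proof (Rmin_l e1 e2). pose proof (Rmin_r e1 e2).
      apply Rabs_lt_iff in Hd. unfold ppath; destruct Rle_dec.
      * apply Hc1. lra. apply Rabs_lt_iff; lra.
      * apply Hc2. lra. apply Rabs_lt_iff; lra.
Qed.

Lemma ppath_0 g1 g2 : ppath g1 g2 0 = g1 0.
Proof. rewrite ppath_l by lra. f_equal; ring. Qed.
Lemma ppath_1 g1 g2 : ppath g1 g2 1 = g2 1.
Proof. rewrite ppath_r by lra. f_equal; ring. Qed.

End Paths.

Section Cov.
Variables (M : Type) (tau : Topology M) (M1 : M -> Prop) (f : M -> M).
Hypothesis Hcov : partial_self_covering tau M1 f.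

Lemma f_cont_path (S : M -> Prop) dl : (forall x, S x -> M1 x) -> is_path tau S dl ->
  is_path tau (fun y => exists x, S x /\ f x = y) (fun s => f (dl s)).
Proof.
  intros HS [A C]. destruct Hcov as [Hc _]. split.
  - intros s Hs; eauto.
  - intros V HV s Hs HVs. destruct (Hc V HV) as [U [HU HUi]].
    assert (U (dl s)) by (apply HUi; split; auto; apply HS, A, Hs).
    destruct (C U HU s Hs H) as [e [He Hcc]]. exists e; split; auto.
    intros s' Hs' Hd. apply HUi. auto.
Qed.

Lemma lift1_unique (e : R -> M) dl1 dl2 :
  is_path tau M1 dl1 -> is_path tau M1 dl2 ->
  (forall s, 0<=s<=1 -> f (dl1 s) = e s) -> (forall s, 0<=s<=1 -> f (dl2 s) = e s) ->
  dl1 0 = dl2 0 -> forall s, 0<=s<=1 -> dl1 s = dl2 s.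
Proof.
  intros [A1 C1] [A2 C2] E1 E2 H0. apply real_ind.
  intros s Hs Hyp. destruct Hcov as [_ [Hev _]].
  destruct (Hev (e s)) as [U [HU [HUs [I [W [HW1 [HW2 [HW3 HW4]]]]]]]].
  destruct (proj1 (HW2 (dl1 s) (A1 s Hs)) ltac:(rewrite E1; auto)) as [i Hi].
  destruct (proj1 (HW2 (dl2 s) (A2 s Hs)) ltac:(rewrite E2; auto)) as [j Hj].
  destruct (HW1 i) as [[Oi [HOi HOi']] _]. destruct (HW1 j) as [[Oj [HOj HOj']] _].
  destruct (C1 Oi HOi s Hs ltac:(apply HOi'; auto)) as [e1 [He1 Hc1]].
  destruct (C2 Oj HOj s Hs ltac:(apply HOj'; auto)) as [e2 [He2 Hc2]].
  set (eps := Rmin e1 e2). assert (eps > 0) by (apply Rmin_pos; auto).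
  pose proof (Rmin_l e1 e2) as Hm1. pose proof (Rmin_r e1 e2) as Hm2. fold eps in Hm1, Hm2.
  assert (Hij : i = j).
  { set (s1 := Rmax 0 (s - eps/2)).
    assert (Hs1 : 0 <= s1 <= s /\ Rabs (s1 - s) < eps).
    { unfold s1, Rmax; destruct Rle_dec; (split; [split; lra|apply Rabs_lt_iff; lra]). }
    assert (Heq : dl1 s1 = dl2 s1).
    { destruct (Rlt_or_le s1 s). apply Hyp; lra. assert (s = 0) by (unfold s1, Rmax in *; destruct Rle_dec; lra).
      replace s1 with 0 by lra. auto. }
    apply (HW3 i j (dl1 s1)).
    - apply HOi'. split. apply A1; lra. apply Hc1. lra. lra.
    - rewrite Heq. apply HOj'. split. apply A2; lra. apply Hc2. lra. lra. }
  subst j. exists eps. split; auto. intros s' Hs' Hlt.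
  destruct (Rlt_or_le s' s) as [Hl|Hl]. apply Hyp; lra.
  assert (Hd : Rabs (s'-s) < eps) by (apply Rabs_lt_iff; lra).
  destruct (HW4 i) as [_ [_ [Hinj _]]]. apply Hinj.
  - apply HOi'. split. apply A1; auto. apply Hc1; auto. lra.
  - apply HOj'. split. apply A2; auto. apply Hc2; auto. lra.
  - rewrite E1, E2; auto.
Qed.

Definition lift1 (e dl : R -> M) (x : R) :=
  (forall s, 0<=s<=x -> M1 (dl s) /\ f (dl s) = e s) /\ pcont tau 0 x dl.

Lemma lift1_exists (e : R -> M) z : is_path tau (fun _ => True) e -> M1 z -> f z = e 0 ->
  exists dl, is_path tau M1 dl /\ (forall s, 0<=s<=1 -> f (dl s) = e s) /\ dl 0 = z.
Proof.
  intros [_ Ce] Hz Hfz.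
  assert (Hall : forall x, 0<=x<=1 -> exists dl, dl 0 = z /\ lift1 e dl x).
  2:{ destruct (Hall 1 ltac:(lra)) as [dl [H0 [Hl Hc]]]. exists dl. split; [split|split]; auto.
      intros s Hs; apply Hl; auto. intros s Hs; apply Hl; auto. }
  apply real_ind. intros s Hs Hyp. destruct Hcov as [_ [Hev _]].
  destruct (Hev (e s)) as [U [HU [HUs [I [W [HW1 [HW2 [HW3 HW4]]]]]]]].
  destruct (Ce U HU s Hs HUs) as [e0 [He0 Hce]].
  set (s1 := Rmax 0 (s - e0/2)).
  assert (Hs1 : 0 <= s1 <= s /\ s - e0/2 <= s1).
  { unfold s1, Rmax; destruct Rle_dec; (split; [split|]; lra). }
  assert (Hq : exists dl, dl 0 = z /\ lift1 e dl s1).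
  { destruct (Rlt_or_le s1 s). apply Hyp; lra.
    assert (s1 = 0) by (unfold s1, Rmax in *; destruct Rle_dec; lra).
    exists (cpath z). split; auto. split.
    - intros r Hr. unfold cpath. replace r with 0 by lra. split; auto.
    - intros V HV r Hr HVr. exists 1; split; [lra|]. intros r' Hr' _. unfold cpath; auto. }
  destruct Hq as [dl [Hdl0 [Hdl Cdl]]].
  assert (HUs1 : U (e s1)) by (apply Hce; [lra| apply Rabs_lt_iff; lra]).
  destruct (Hdl s1 ltac:(lra)) as [HM1 Hf1].
  destruct (proj1 (HW2 _ HM1) ltac:(rewrite Hf1; auto)) as [i Hi].
  destruct (HW4 i) as [HWU [Hsurj [Hinj Hopen]]].
  set (sig := fun u => epsilon (inhabits z) (fun y => W i y /\ f y = u)).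
  assert (Hsig : forall u, U u -> W i (sig u) /\ f (sig u) = u).
  { intros u Hu. unfold sig. apply epsilon_spec. apply Hsurj; auto. }
  assert (Hsig1 : sig (e s1) = dl s1).
  { destruct (Hsig _ HUs1). apply Hinj; auto. congruence. }
  assert (Hsigc : forall r, 0<=r<=1 -> U (e r) -> forall V, open tau V -> V (sig (e r)) ->
            exists eps, eps > 0 /\ forall r', 0<=r'<=1 -> Rabs (r'-r) < eps -> V (sig (e r'))).
  { intros r Hr HUr V HV HVr.
    destruct (Hopen (fun y => W i y /\ V y)) as [O' [HO' HO'i]].
    { exists V; split; auto. tauto. }
    assert (Hr' : (fun u => U u /\ O' u) (e r)).
    { apply HO'i. exists (sig (e r)). split; [split|]; auto; apply Hsig; auto. }
    destruct (Ce _ (open_inter tau _ _ HU HO') r Hr Hr') as [ee [Hee Hc]].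
    exists ee; split; auto. intros r' Hr'1 Hd.
    destruct (proj2 (HO'i (e r')) (Hc r' Hr'1 Hd)) as [y [[Wy Vy] Hfy]].
    destruct (Hc r' Hr'1 Hd) as [HU' _].
    replace (sig (e r')) with y; auto. destruct (Hsig _ HU'). apply Hinj; auto. congruence. }
  set (dl' := fun r => if Rle_dec r s1 then dl r else sig (e r)).
  exists (e0/2). split. lra. intros x Hx Hxlt. exists dl'. split.
  { unfold dl'; destruct Rle_dec; auto. lra. }
  assert (HUr : forall r, s1 < r <= x -> U (e r)).
  { intros r Hr. apply Hce. lra. apply Rabs_lt_iff; lra. }
  split.
  - intros r Hr. unfold dl'; destruct Rle_dec. apply Hdl; lra.
    destruct (Hsig (e r)) as [Hw Hf']. apply HUr; lra. split; auto.
    destruct (HW1 i) as [_ HM]. auto.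
  - intros V HV r Hr HVr.
    destruct (Rlt_or_le r s1) as [Hl|Hl]; [|destruct (Rle_lt_or_eq_dec _ _ Hl) as [Hr2|Hr2]].
    + unfold dl' in HVr; destruct Rle_dec; [|lra].
      destruct (Cdl V HV r ltac:(lra) HVr) as [e1 [He1 Hc1]].
      exists (Rmin e1 (s1 - r)). split. apply Rmin_pos; lra.
      intros r' Hr' Hd. pose proof (Rmin_l e1 (s1-r)). pose proof (Rmin_r e1 (s1-r)).
      apply Rabs_lt_iff in Hd. unfold dl'; destruct Rle_dec; [|lra]. apply Hc1. lra. apply Rabs_lt_iff; lra.
    + unfold dl' in HVr; destruct Rle_dec; [lra|].
      destruct (Hsigc r ltac:(lra) (HUr r ltac:(lra)) V HV HVr) as [e1 [He1 Hc1]].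
      exists (Rmin e1 (r - s1)). split. apply Rmin_pos; lra.
      intros r' Hr' Hd. pose proof (Rmin_l e1 (r-s1)). pose proof (Rmin_r e1 (r-s1)).
      apply Rabs_lt_iff in Hd. unfold dl'; destruct Rle_dec; [lra|]. apply Hc1. lra. apply Rabs_lt_iff; lra.
    + subst r. unfold dl' in HVr; destruct Rle_dec; [|lra].
      destruct (Cdl V HV s1 ltac:(lra) HVr) as [e1 [He1 Hc1]].
      rewrite <- Hsig1 in HVr.
      destruct (Hsigc s1 ltac:(lra) HUs1 V HV HVr) as [e2 [He2 Hc2]].
      exists (Rmin e1 e2). split. apply Rmin_pos; lra.
      intros r' Hr' Hd. pose proof (Rmin_l e1 e2). pose proof (Rmin_r e1 e2).
      apply Rabs_lt_iff in Hd. unfold dl'; destruct Rle_dec.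
      * apply Hc1. lra. apply Rabs_lt_iff; lra.
      * apply Hc2. lra. apply Rabs_lt_iff; lra.
Qed.

End Cov.

Unset Implicit Arguments.
Section All.
Variables (M : Type) (tau : Topology M) (M1 : M -> Prop) (f : M -> M).
Hypothesis Hcov : partial_self_covering tau M1 f.
Variables (t : M) (nd : nat) (tpt : X nd -> M) (ell : X nd -> R -> M).
Hypothesis Htinj : forall i j, tpt i = tpt j -> i = j.
Hypothesis Htfib : forall y, (M1 y /\ f y = t) <-> exists i, tpt i = y.
Hypothesis Hell : forall i, is_path tau (fun _ => True) (ell i) /\ ell i 0%R = t /\ ell i 1%R = tpt i.


Lemma iter_swap k x : Nat.iter k f (f x) = f (Nat.iter k f x).
Proof. induction k; simpl; congruence. Qed.

Lemma iter_add k j x : Nat.iter (k + j) f x = Nat.iter j f (Nat.iter k f x).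
Proof.
  revert x; induction k; intros x; simpl. auto.
  rewrite IHk, iter_swap. reflexivity.
Qed.

Lemma Mn_add k j x : Mn M1 f (k + j) x <-> Mn M1 f k x /\ Mn M1 f j (Nat.iter k f x).
Proof.
  revert x; induction k; intros x; simpl. tauto.
  rewrite IHk. rewrite iter_swap. tauto.
Qed.

Lemma f_path_Mn k dl : is_path tau (Mn M1 f (S k)) dl -> is_path tau (Mn M1 f k) (fun s => f (dl s)).
Proof.
  intros H. pose proof (f_cont_path Hcov (S := Mn M1 f (S k)) (dl := dl)) as H1.
  eapply is_path_weaken; [|apply H1; auto]. intros y [x [[_ Hx] <-]]; auto.
  intros x [Hx _]; auto.
Qed.

Definition LiftP k (g dl : R -> M) z :=
  is_path tau (Mn M1 f k) dl /\ (forall s, 0<=s<=1 -> Nat.iter k f (dl s) = g s) /\ dl 0 = z.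

Lemma Lift_iff k g z w : Lift tau M1 f k g z w <-> exists dl, LiftP k g dl z /\ dl 1 = w.
Proof. unfold Lift, LiftP. firstorder. Qed.

Lemma liftP_exists k : forall g z, is_path tau (fun _ => True) g -> Mn M1 f k z ->
  Nat.iter k f z = g 0 -> exists dl, LiftP k g dl z.
Proof.
  induction k; intros g z Hg Hz Hz0.
  - exists g. split; [|split]. eapply is_path_weaken; [|eauto]. simpl; auto.
    simpl; auto. simpl in Hz0; auto.
  - destruct Hz as [Hz1 Hz2].
    destruct (IHk g (f z) Hg Hz2) as [e [He [He1 He2]]].
    { rewrite iter_swap; auto. }
    assert (He' : is_path tau (fun _ => True) e) by (eapply is_path_weaken; [|eauto]; auto).
    destruct (lift1_exists Hcov (e:=e) z He' Hz1 (eq_sym He2)) as [dl [Hd [Hd1 Hd2]]].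
    exists dl. split; [|split]; auto.
    + destruct Hd as [A C]. split; auto. intros s Hs. split; auto. rewrite Hd1; auto. apply He; auto.
    + intros s Hs. simpl. rewrite <- iter_swap, Hd1; auto.
Qed.

Lemma liftP_unique k : forall g dl1 dl2 z, LiftP k g dl1 z -> LiftP k g dl2 z ->
  forall s, 0<=s<=1 -> dl1 s = dl2 s.
Proof.
  induction k; intros g dl1 dl2 z [P1 [E1 Z1]] [P2 [E2 Z2]].
  - intros s Hs. simpl in *. rewrite E1, E2; auto.
  - assert (Hfe : forall s, 0<=s<=1 -> f (dl1 s) = f (dl2 s)).
    { apply (IHk g (fun s => f (dl1 s)) (fun s => f (dl2 s)) (f z)).
      - split; [|split].
        + apply f_path_Mn; auto.
        + intros s Hs. rewrite iter_swap. apply E1; auto.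
        + congruence.
      - split; [|split].
        + apply f_path_Mn; auto.
        + intros s Hs. rewrite iter_swap. apply E2; auto.
        + congruence. }
    apply (lift1_unique Hcov (fun s => f (dl1 s))); auto.
    + eapply is_path_weaken; [|eauto]. intros x [Hx _]; auto.
    + eapply is_path_weaken; [|eauto]. intros x [Hx _]; auto.
    + intros s Hs. symmetry; auto.
    + congruence.
Qed.

Lemma Lift_unique k g z w1 w2 : Lift tau M1 f k g z w1 -> Lift tau M1 f k g z w2 -> w1 = w2.
Proof.
  rewrite !Lift_iff. intros [d1 [H1 <-]] [d2 [H2 <-]]. eapply liftP_unique; eauto. lra.
Qed.

Lemma Lift_exists k g z : is_path tau (fun _ => True) g -> Mn M1 f k z ->
  Nat.iter k f z = g 0 -> exists w, Lift tau M1 f k g z w.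
Proof.
  intros. destruct (liftP_exists k g z) as [dl Hdl]; auto. exists (dl 1). apply Lift_iff; eauto.
Qed.

Lemma liftEnd_eq k g z w : Lift tau M1 f k g z w -> liftEnd tau M1 f k g z = w.
Proof.
  intros H. unfold liftEnd. apply (Lift_unique k g z); auto.
  apply epsilon_spec. eauto.
Qed.

Lemma Lift_end k g z w : Lift tau M1 f k g z w -> Mn M1 f k w /\ Nat.iter k f w = g 1.
Proof. intros [dl [[A _] [E [_ <-]]]]. split. apply A; lra. apply E; lra. Qed.

Lemma Lift_start k g z w : Lift tau M1 f k g z w -> Mn M1 f k z /\ Nat.iter k f z = g 0.
Proof. intros [dl [[A _] [E [<- _]]]]. split. apply A; lra. apply E; lra. Qed.

Lemma Lift_cat k g1 g2 z w1 w2 : Lift tau M1 f k g1 z w1 -> Lift tau M1 f k g2 w1 w2 ->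
  Lift tau M1 f k (ppath g1 g2) z w2.
Proof.
  intros [d1 [P1 [E1 [Z1 W1]]]] [d2 [P2 [E2 [Z2 W2]]]].
  exists (ppath d1 d2). split; [|split; [|split]].
  - apply is_path_cat; auto. congruence.
  - intros s Hs. unfold ppath. destruct Rle_dec; [apply E1|apply E2]; lra.
  - rewrite ppath_0; auto.
  - rewrite ppath_1; auto.
Qed.

Lemma Lift_rev k g z w : Lift tau M1 f k g z w -> Lift tau M1 f k (rpath g) w z.
Proof.
  intros [d [P [E [Z W]]]]. exists (rpath d). split; [|split; [|split]].
  - apply is_path_rev; auto.
  - intros s Hs. unfold rpath. apply E; lra.
  - unfold rpath. replace (1-0) with 1 by ring; auto.
  - unfold rpath. replace (1-1) with 0 by ring; auto.
Qed.

Lemma Lift_S k g z w : Lift tau M1 f (S k) g z w -> Lift tau M1 f k g (f z) (f w).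
Proof.
  intros [d [P [E [Z W]]]]. exists (fun s => f (d s)). split; [|split; [|split]].
  - apply f_path_Mn; auto.
  - intros s Hs. rewrite iter_swap. apply E; auto.
  - congruence.
  - congruence.
Qed.

Lemma Lift_ext k g g' z w : (forall s, 0<=s<=1 -> g s = g' s) -> Lift tau M1 f k g z w ->
  Lift tau M1 f k g' z w.
Proof.
  intros He [d [P [E [Z W]]]]. exists d. split; auto. split; auto. intros s Hs. rewrite <- He; auto.
Qed.

Lemma Lift_const k z : Mn M1 f k z -> Lift tau M1 f k (cpath (Nat.iter k f z)) z z.
Proof.
  intros Hz. exists (cpath z). split; [apply is_path_const; auto|]. split; auto.
Qed.

Lemma Lift_0 g : is_path tau (fun _ => True) g -> Lift tau M1 f 0 g (g 0) (g 1).
Proof.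
  intros Hg. exists g. split; [|split;[|split]]; auto.

Qed.

Lemma Lift_comp j k g z lam y y' : LiftP j g lam z -> Lift tau M1 f k lam y y' ->
  Lift tau M1 f (k + j) g y y'.
Proof.
  intros [PL [EL ZL]] [d [P [E [Z W]]]]. exists d. split; [|split; [|split]]; auto.
  - destruct P as [A C]. split; auto. intros s Hs. apply Mn_add. split. apply A; auto.
    rewrite E; auto. apply PL; auto.
  - intros s Hs. rewrite iter_add, E; auto.
Qed.

Notation T := (liftEnd tau M1 f).
Notation L := (Lam tau M1 f t ell).

Lemma T_Lift k g z : is_path tau (fun _ => True) g -> Mn M1 f k z -> Nat.iter k f z = g 0 ->
  Lift tau M1 f k g z (T k g z).
Proof.
  intros. destruct (Lift_exists k g z) as [w Hw]; auto.
  rewrite (liftEnd_eq k g z w); auto.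
Qed.

Lemma Lam_vertex a : Mn M1 f (length a) (L a) /\ Nat.iter (length a) f (L a) = t.
Proof.
  induction a as [|x a IH]. simpl; split; auto.
  replace (length (x::a)) with (length a + 1)%nat by (simpl; lia). cbn [Lam].
  destruct (Hell x) as [Hp [H0 H1]]. destruct IH as [IH1 IH2].
  pose proof (T_Lift (length a) (ell x) (L a) Hp IH1 ltac:(congruence)) as HL.
  destruct (Lift_end (length a) _ _ _ HL) as [E1 E2].
  rewrite H1 in E2. assert (Hm : M1 (tpt x) /\ f (tpt x) = t) by (apply Htfib; eauto).
  split. apply Mn_add. split; auto. rewrite E2. simpl; tauto.
  rewrite iter_add, E2. simpl. tauto.
Qed.

Lemma Lam_snoc a y : f (L (a ++ [y])) = L a.
Proof.
  induction a as [|x a IH]; simpl.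
  - destruct (Hell y) as [Hp [H0 H1]].
    rewrite (liftEnd_eq 0 (ell y) t (tpt y)).
    apply Htfib; eauto. rewrite <- H0, <- H1. apply Lift_0; auto.
  - destruct (Hell x) as [Hp [H0 H1]].
    destruct (Lam_vertex (a ++ [y])) as [V1 V2].
    rewrite length_app in *. simpl in *.
    replace (length a + 1)%nat with (S (length a)) in * by lia.
    pose proof (T_Lift (S (length a)) (ell x) (L (a ++ [y])) Hp V1 ltac:(congruence)) as HL.
    apply (Lift_S) in HL. rewrite IH in HL.
    apply (liftEnd_eq) in HL. congruence.
Qed.

Lemma T_rev k g z : is_path tau (fun _ => True) g -> Mn M1 f k z -> Nat.iter k f z = g 0 ->
  T k (rpath g) (T k g z) = z.
Proof.
  intros. apply (liftEnd_eq). apply Lift_rev. apply T_Lift; auto.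
Qed.

Lemma Lam_inj a b : length a = length b -> L a = L b -> a = b.
Proof.
  revert b; induction a as [|x a IH]; intros [|y b] Hl He; simpl in *; try discriminate; auto.
  injection Hl as Hl.
  destruct (Hell x) as [Hpx [Hx0 Hx1]]. destruct (Hell y) as [Hpy [Hy0 Hy1]].
  destruct (Lam_vertex a) as [Va1 Va2]. destruct (Lam_vertex b) as [Vb1 Vb2].
  pose proof (T_Lift _ _ _ Hpx Va1 ltac:(congruence)) as HLx.
  pose proof (T_Lift _ _ _ Hpy Vb1 ltac:(congruence)) as HLy.
  assert (x = y).
  { apply Htinj. apply Lift_end in HLx. apply Lift_end in HLy. rewrite <- Hx1, <- Hy1.
    destruct HLx as [_ <-], HLy as [_ <-]. rewrite He, Hl. auto. }
  subst y. f_equal. apply IH; auto.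
  rewrite <- (T_rev (length a) (ell x) (L a)); auto; [|congruence].
  rewrite <- (T_rev (length b) (ell x) (L b)); auto; [|congruence].
  rewrite He, Hl. auto.
Qed.

Lemma Lam_surj n y : Mn M1 f n y -> Nat.iter n f y = t -> exists a, length a = n /\ L a = y.
Proof.
  revert y; induction n as [|n IH]; intros y Hy Ht.
  - exists []. simpl in *. auto.
  - replace (S n) with (n + 1)%nat in Hy, Ht by lia.
    apply Mn_add in Hy. destruct Hy as [Hy1 Hy2]. rewrite iter_add in Ht. simpl in Hy2, Ht.
    destruct (proj1 (Htfib (Nat.iter n f y)) (conj (proj1 Hy2) Ht)) as [x Hx].
    destruct (Hell x) as [Hp [H0 H1]].
    assert (HL : Lift tau M1 f n (rpath (ell x)) y (T n (rpath (ell x)) y)).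
    { apply T_Lift; auto. apply is_path_rev; auto. unfold rpath. replace (1-0) with 1 by ring. congruence. }
    destruct (Lift_end _ _ _ _ HL) as [E1 E2].
    assert (E3 : Nat.iter n f (T n (rpath (ell x)) y) = t) by (rewrite E2; unfold rpath; replace (1-1) with 0 by ring; auto).
    destruct (IH _ E1 E3) as [a [Ha1 Ha2]].
    exists (x :: a). split. simpl; auto. simpl. rewrite Ha1, Ha2.
    apply (liftEnd_eq). apply Lift_rev in HL.
    eapply Lift_ext; [|exact HL]. intros s Hs. unfold rpath. f_equal. ring.
Qed.

Definition lpath k g z : R -> M := epsilon (inhabits (cpath z)) (fun dl => LiftP k g dl z).

Lemma lpath_spec k g z : is_path tau (fun _ => True) g -> Mn M1 f k z -> Nat.iter k f z = g 0 ->
  LiftP k g (lpath k g z) z /\ lpath k g z 1 = T k g z.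
Proof.
  intros Hg Hz Hz0.
  destruct (liftP_exists k g z Hg Hz Hz0) as [dl Hdl].
  assert (HP : LiftP k g (lpath k g z) z) by (unfold lpath; apply epsilon_spec; eauto).
  split; auto. symmetry. apply (liftEnd_eq). apply (proj2 (Lift_iff k g z _)). exists (lpath k g z). split; auto.
Qed.

Fixpoint delta (a : list (X nd)) : R -> M :=
  match a with
  | [] => cpath t
  | x :: a' => ppath (delta a') (lpath (length a') (ell x) (L a'))
  end.

Lemma delta_spec a : is_path tau (fun _ => True) (delta a) /\ delta a 0 = t /\ delta a 1 = L a.
Proof.
  induction a as [|x a [IH1 [IH2 IH3]]]; simpl.
  - split. apply is_path_const; auto. unfold cpath; auto.
  - destruct (Hell x) as [Hp [H0 H1]]. destruct (Lam_vertex a) as [V1 V2].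
    destruct (lpath_spec (length a) (ell x) (L a) Hp V1 ltac:(congruence)) as [[[A C] [E Z]] H1'].
    rewrite ppath_0, ppath_1. split; [|split]; auto.
    apply is_path_cat; auto. split; auto. congruence.
Qed.

Lemma Lam_app a u : L (a ++ u) = T (length u) (delta a) (L u).
Proof.
  induction a as [|x a IH]; simpl.
  - symmetry. apply (liftEnd_eq). destruct (Lam_vertex u) as [V1 V2].
    rewrite <- V2 at 1. apply Lift_const; auto.
  - destruct (Hell x) as [Hp [H0 H1]]. destruct (Lam_vertex a) as [Va1 Va2].
    destruct (Lam_vertex u) as [Vu1 Vu2]. destruct (delta_spec a) as [D1 [D2 D3]].
    destruct (lpath_spec (length a) (ell x) (L a) Hp Va1 ltac:(congruence)) as [HP HP1].
    symmetry. apply (liftEnd_eq).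
    assert (HL1 : Lift tau M1 f (length u) (delta a) (L u) (L (a ++ u))).
    { rewrite IH. apply T_Lift; auto. congruence. }
    destruct (Lift_end _ _ _ _ HL1) as [E1 E2].
    assert (HL2 : Lift tau M1 f (length u) (lpath (length a) (ell x) (L a)) (L (a++u))
                   (T (length u) (lpath (length a) (ell x) (L a)) (L (a++u)))).
    { destruct HP as [[A C] [E Z]]. apply T_Lift; auto. split; auto. congruence. }
    eapply Lift_cat; [exact HL1|].
    replace (T (length (a ++ u)) (ell x) (L (a ++ u))) with
      (T (length u) (lpath (length a) (ell x) (L a)) (L (a++u))); auto.
    symmetry. apply (liftEnd_eq).
    rewrite length_app, Nat.add_comm. eapply Lift_comp; eauto.
Qed.


Notation LI := (LamInf tau M1 f t ell).

Lemma rpath_rpath (g : R -> M) : rpath (rpath g) = g.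
Proof. apply functional_extensionality; intros s; unfold rpath; f_equal; ring. Qed.

Lemma T_spec k g z : is_path tau (fun _ => True) g -> Mn M1 f k z -> Nat.iter k f z = g 0 ->
  Mn M1 f k (T k g z) /\ Nat.iter k f (T k g z) = g 1.
Proof. intros. apply (Lift_end k g z). apply T_Lift; auto. Qed.

Lemma T_cat k g1 g2 z : is_path tau (fun _ => True) g1 -> is_path tau (fun _ => True) g2 ->
  g1 1 = g2 0 -> Mn M1 f k z -> Nat.iter k f z = g1 0 ->
  T k (ppath g1 g2) z = T k g2 (T k g1 z).
Proof.
  intros P1 P2 E Hz Hz0. apply liftEnd_eq.
  pose proof (T_Lift k g1 z P1 Hz Hz0) as HL1.
  destruct (T_spec k g1 z P1 Hz Hz0) as [A B].
  eapply Lift_cat; [exact HL1|]. apply T_Lift; auto. congruence.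
Qed.

Lemma T_rev2 k g z : is_path tau (fun _ => True) g -> Mn M1 f k z -> Nat.iter k f z = g 1 ->
  T k g (T k (rpath g) z) = z.
Proof.
  intros P Hz Hz0. rewrite <- (rpath_rpath g) at 1. apply T_rev; auto.
  apply is_path_rev; auto. unfold rpath. replace (1-0) with 1 by ring. auto.
Qed.

Lemma end_down xi : is_end M1 f t xi -> forall n k, Mn M1 f k (xi (n + k)%nat) /\ Nat.iter k f (xi (n+k)%nat) = xi n.
Proof.
  intros [H0 HS] n k. induction k as [|k [IH1 IH2]].
  - rewrite Nat.add_0_r. simpl; auto.
  - replace (n + S k)%nat with (S (n + k)) by lia. destruct (HS (n+k)%nat) as [A B].
    split. simpl. rewrite B. auto. simpl. rewrite <- iter_swap, B. auto.
Qed.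

Lemma end_vertex xi : is_end M1 f t xi -> forall n, Mn M1 f n (xi n) /\ Nat.iter n f (xi n) = t.
Proof. intros H n. destruct (end_down xi H 0 n) as [A B]. simpl in *. destruct H. split; [auto|congruence]. Qed.

Lemma LI_vertex w n : Mn M1 f n (LI w n) /\ Nat.iter n f (LI w n) = t.
Proof.
  unfold LamInf. destruct (Lam_vertex (map w (seq 0 n))) as [A B].
  rewrite length_map, length_seq in A, B. auto.
Qed.

Lemma LI_end w : is_end M1 f t (LI w).
Proof.
  split. reflexivity. intros k. unfold LamInf. rewrite seq_S, map_app. simpl.
  split. destruct (Lam_vertex (map w (seq 0 k) ++ [w k])) as [A _].
  rewrite length_app in A. simpl in A. replace (length (map w (seq 0 k)) + 1)%nat with
    (S (length (map w (seq 0 k)))) in A by lia. destruct A; auto.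
  apply Lam_snoc.
Qed.

Definition wordOf n y : list (X nd) := epsilon (inhabits []) (fun a => length a = n /\ L a = y).

Lemma wordOf_spec n y : Mn M1 f n y -> Nat.iter n f y = t -> length (wordOf n y) = n /\ L (wordOf n y) = y.
Proof. intros. unfold wordOf. apply epsilon_spec. apply Lam_surj; auto. Qed.

Lemma wordOf_L a : wordOf (length a) (L a) = a.
Proof.
  destruct (Lam_vertex a) as [A B]. destruct (wordOf_spec _ _ A B) as [C D].
  apply Lam_inj; auto.
Qed.

Definition invL (x0 : X nd) (xi : nat -> M) : nat -> X nd :=
  fun i => last (wordOf (S i) (xi (S i))) x0.

Lemma map_invL x0 xi : is_end M1 f t xi -> forall n, map (invL x0 xi) (seq 0 n) = wordOf n (xi n).
Proof.
  intros He n. induction n as [|n IH].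
  - simpl. destruct (end_vertex xi He 0%nat) as [A B]. destruct (wordOf_spec _ _ A B) as [C _].
    destruct (wordOf 0 (xi 0%nat)); simpl in *; auto; discriminate.
  - rewrite seq_S, map_app, IH. simpl.
    destruct (end_vertex xi He (S n)) as [A B]. destruct (wordOf_spec _ _ A B) as [C D].
    destruct (exists_last (l := wordOf (S n) (xi (S n)))) as [c [y Hc]].
    { intros E; rewrite E in C; discriminate. }
    unfold invL. rewrite Hc, last_last. f_equal.
    destruct (end_vertex xi He n) as [A' B']. destruct (wordOf_spec _ _ A' B') as [C' D'].
    apply Lam_inj. rewrite Hc, length_app in C. simpl in C. lia.
    rewrite D'. rewrite Hc in D. rewrite <- (Lam_snoc c y), D. destruct He as [_ HS]. symmetry; apply HS.
Qed.

Lemma LI_invL x0 xi : is_end M1 f t xi -> LI (invL x0 xi) = xi.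
Proof.
  intros He. apply functional_extensionality; intros n. unfold LamInf. rewrite map_invL; auto.
  destruct (end_vertex xi He n) as [A B]. apply (wordOf_spec _ _ A B).
Qed.

Lemma invL_LI x0 w : invL x0 (LI w) = w.
Proof.
  apply functional_extensionality; intros i. unfold invL, LamInf.
  pose proof (wordOf_L (map w (seq 0 (S i)))) as E. rewrite length_map, length_seq in E.
  rewrite E, seq_S, map_app. simpl. apply last_last.
Qed.

Lemma inf_prefix_map (a : list (X nd)) w : inf_prefix a w <-> map w (seq 0 (length a)) = a.
Proof.
  unfold inf_prefix. split.
  - intros H. apply nth_error_ext. intros i. destruct (Nat.lt_ge_cases i (length a)) as [Hi|Hi].
    + rewrite H by auto. rewrite nth_error_map, nth_error_seq. destruct (Nat.ltb_spec i (length a)); [|lia]. auto.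
    + rewrite (proj2 (nth_error_None a i) Hi). apply nth_error_None. rewrite length_map, length_seq. auto.
  - intros H i Hi. rewrite <- H. rewrite nth_error_map, nth_error_seq.
    destruct (Nat.ltb_spec i (length a)); [|lia]. auto.
Qed.

Lemma LI_len a w : LI w (length a) = L a <-> inf_prefix a w.
Proof.
  rewrite inf_prefix_map. unfold LamInf. split.
  - intros H. apply Lam_inj; auto. rewrite length_map, length_seq; auto.
  - intros ->; auto.
Qed.

Lemma map_prepend (a : list (X nd)) w j : map (prepend a w) (seq 0 (length a + j)) = a ++ map w (seq 0 j).
Proof.
  induction a as [|x a IH]; simpl. auto.
  f_equal. rewrite <- seq_shift, map_map. simpl. auto.
Qed.

Lemma prepend_prefix (a : list (X nd)) w : inf_prefix a (prepend a w).
Proof. apply inf_prefix_map. rewrite <- (Nat.add_0_r (length a)), map_prepend. simpl. apply app_nil_r. Qed.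

Lemma LI_prepend a w j : LI (prepend a w) (length a + j) = T j (delta a) (LI w j).
Proof.
  unfold LamInf at 1. rewrite map_prepend, Lam_app. rewrite length_map, length_seq. auto.
Qed.

Lemma prepend_drop (a : list (X nd)) w : inf_prefix a w -> prepend a (fun i => w (length a + i)%nat) = w.
Proof.
  intros H. apply functional_extensionality. revert w H. induction a as [|x a IH]; intros w H i; simpl. auto.
  destruct i as [|i].
  - specialize (H 0%nat ltac:(simpl; lia)). simpl in H. injection H; auto.
  - pose proof (IH (fun j => w (S j))) as IH'. simpl in IH'. rewrite IH'. auto.
    intros j Hj. apply (H (S j)). simpl; lia.
Qed.

Lemma S_lt n m u g xi j : (j < m)%nat -> S_path tau M1 f n m u g xi j = Nat.iter (m - j) f u.
Proof. intros H. unfold S_path. destruct (Nat.ltb_spec j m); auto; lia. Qed.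

Lemma S_ge n m u g xi j : (m <= j)%nat -> S_path tau M1 f n m u g xi j = T (j - m) g (xi (n + (j - m))%nat).
Proof. intros H. unfold S_path. destruct (Nat.ltb_spec j m); auto; lia. Qed.

Lemma S_end n m u g xi : is_end M1 f t xi -> is_vertex M1 f t m u ->
  is_path tau (fun _ => True) g -> g 0 = xi n -> g 1 = u ->
  is_end M1 f t (S_path tau M1 f n m u g xi) /\ S_path tau M1 f n m u g xi m = u.
Proof.
  intros He [Hu1 Hu2] Hg Hg0 Hg1.
  assert (HL : forall k, Lift tau M1 f k g (xi (n + k)%nat) (T k g (xi (n + k)%nat))).
  { intros k. destruct (end_down xi He n k) as [A B]. apply T_Lift; auto. congruence. }
  assert (Hm : S_path tau M1 f n m u g xi m = u).
  { rewrite S_ge by lia. rewrite Nat.sub_diag. specialize (HL 0%nat).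
    apply Lift_end in HL. destruct HL as [_ HL]. simpl in HL. congruence. }
  split; auto. split.
  - destruct m as [|m]. rewrite Hm. auto. rewrite S_lt by lia. auto.
  - intros j. destruct (Nat.lt_ge_cases (S j) m) as [H1|H1].
    + rewrite !S_lt by lia.
      replace m with ((m - S j) + S j)%nat in Hu1 at 1 by lia. apply Mn_add in Hu1.
      destruct Hu1 as [_ Hu1]. simpl in Hu1. split. tauto.
      replace (m - j)%nat with (S (m - S j)) by lia. reflexivity.
    + destruct (Nat.eq_dec (S j) m) as [E|E].
      * subst m. rewrite Hm. rewrite S_lt by lia.
        destruct Hu1 as [Hu1 _]. split; auto. replace (S j - j)%nat with 1%nat by lia. reflexivity.
      * rewrite !S_ge by lia. replace (S j - m)%nat with (S (j - m)) by lia.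
        pose proof (HL (S (j - m))) as HL1. destruct (Lift_end _ _ _ _ HL1) as [[A _] _].
        split; auto. apply Lift_S in HL1.
        destruct He as [_ HS]. replace (n + S (j - m))%nat with (S (n + (j - m))) in * by lia.
        rewrite (proj2 (HS _)) in HL1. symmetry. apply liftEnd_eq. auto.
Qed.

Lemma S_rev n m u g xi : is_end M1 f t xi -> is_vertex M1 f t m u ->
  is_path tau (fun _ => True) g -> g 0 = xi n -> g 1 = u ->
  forall j, S_path tau M1 f m n (xi n) (rpath g) (S_path tau M1 f n m u g xi) j = xi j.
Proof.
  intros He Hu Hg Hg0 Hg1 j. destruct (Nat.lt_ge_cases j n) as [H|H].
  - rewrite S_lt by auto. destruct (end_down xi He j (n - j)) as [_ B].
    replace (j + (n - j))%nat with n in B by lia. auto.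
  - rewrite S_ge by auto. rewrite S_ge by lia.
    replace (m + (j - n) - m)%nat with (j - n)%nat by lia.
    destruct (end_down xi He n (j - n)) as [A B].
    rewrite T_rev; auto. f_equal; lia. congruence.
Qed.

Lemma S_prepend a b gam w z : is_path tau (fun _ => True) gam -> gam 0 = L a -> gam 1 = L b ->
  (forall k, T k (delta b) (LI z k) = T k gam (T k (delta a) (LI w k))) ->
  forall j, S_path tau M1 f (length a) (length b) (L b) gam (LI (prepend a w)) j = LI (prepend b z) j.
Proof.
  intros Hg Hg0 Hg1 Hyp j. destruct (Nat.lt_ge_cases j (length b)) as [H|H].
  - rewrite S_lt by auto.
    destruct (end_down _ (LI_end (prepend b z)) j (length b - j)) as [_ B].
    replace (j + (length b - j))%nat with (length b) in B by lia.
    rewrite (proj2 (LI_len b (prepend b z)) (prepend_prefix b z)) in B. auto.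
  - rewrite S_ge by auto. rewrite LI_prepend. rewrite <- Hyp.
    rewrite <- LI_prepend. f_equal. lia.
Qed.

Lemma T_chain3 k g1 g2 g3 z : is_path tau (fun _ => True) g1 -> is_path tau (fun _ => True) g2 ->
  is_path tau (fun _ => True) g3 -> g1 1 = g2 0 -> g2 1 = g3 0 -> Mn M1 f k z -> Nat.iter k f z = g1 0 ->
  T k (ppath (ppath g1 g2) g3) z = T k g3 (T k g2 (T k g1 z)).
Proof.
  intros P1 P2 P3 E1 E2 Hz Hz0.
  rewrite T_cat; auto. rewrite T_cat; auto.
  apply is_path_cat; auto. rewrite ppath_1; auto. rewrite ppath_0; auto.
Qed.

Lemma LI_agree w w' i : (forall k, (k < i)%nat -> w k = w' k) -> LI w i = LI w' i.
Proof.
  intros H. unfold LamInf. f_equal. apply map_ext_in. intros a Ha. apply in_seq in Ha. apply H. lia.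
Qed.

Lemma prefix_cmp (a b : list (X nd)) w : inf_prefix a w -> inf_prefix b w -> word_prefix a b \/ word_prefix b a.
Proof.
  rewrite !inf_prefix_map. intros Ha Hb.
  destruct (Nat.le_ge_cases (length a) (length b)) as [H|H].
  - left. exists (map w (seq (length a) (length b - length a))).
    assert (E : seq 0 (length b) = seq 0 (length a) ++ seq (0 + length a) (length b - length a))
      by (rewrite <- seq_app; f_equal; lia).
    transitivity (map w (seq 0 (length b))); auto. rewrite E, map_app, Ha. auto.
  - right. exists (map w (seq (length b) (length a - length b))).
    assert (E : seq 0 (length a) = seq 0 (length b) ++ seq (0 + length b) (length a - length b))
      by (rewrite <- seq_app; f_equal; lia).
    transitivity (map w (seq 0 (length a))); auto. rewrite E, map_app, Hb. auto.
Qed.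

Lemma cont_conj (G : (nat -> X nd) -> (nat -> X nd)) x0 : seq_cont (fun _ => True) G ->
  seq_cont (is_end M1 f t) (fun xi => LI (G (invL x0 xi))).
Proof.
  intros C xi Hxi n. destruct (C (invL x0 xi) I n) as [m Hm]. exists (S m).
  intros xi' Hxi' Hag i Hi. apply LI_agree. intros k Hk. apply Hm; auto.
  intros q Hq. unfold invL. rewrite Hag; auto. lia. lia.
Qed.

Lemma cont_conj' (H : (nat -> M) -> (nat -> M)) x0 : seq_cont (is_end M1 f t) H -> (forall xi, is_end M1 f t xi -> is_end M1 f t (H xi)) ->
  seq_cont (fun _ => True) (fun w => invL x0 (H (LI w))).
Proof.
  intros C HE w _ n. destruct (C (LI w) (LI_end w) (S n)) as [m Hm]. exists m.
  intros w' _ Hag i Hi. unfold invL. rewrite Hm; auto. apply LI_end.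
  intros q Hq. apply LI_agree. intros k Hk. apply Hag. lia. lia.
Qed.

Lemma antichain_eq (A : list (list (X nd))) a b w : complete_antichain A -> In a A -> In b A ->
  inf_prefix a w -> inf_prefix b w -> a = b.
Proof.
  intros [HA _] Ha Hb Hpa Hpb. destruct (classic (a = b)) as [E|E]; auto.
  exfalso. destruct (prefix_cmp a b w Hpa Hpb) as [P|P].
  - apply (HA a b Ha Hb E P).
  - apply (HA b a Hb Ha (fun e => E (eq_sym e)) P).
Qed.

Lemma dir2 (x0 : X nd) g : in_VIMG tau M1 f t ell g ->
  exists h, in_Vf tau M1 f t h /\ forall w n, h (LI w) n = LI (g w) n.
Proof.
  intros [[_ [gi [_ [Hgig [Hggi [Cg Cgi]]]]]] [A1 [A2 [alpha [HA1 [HA2 [Hal1 [Hal2 [Hal3 Hloop]]]]]]]]].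
  set (Pg := fun v gam => is_path tau (fun _ => True) gam /\ gam 0 = t /\ gam 1 = t /\
     forall w, exists z, (forall n, g (prepend v w) n = prepend (alpha v) z n) /\
                         (forall n, LI z n = S_path tau M1 f 0 0 t gam (LI w) n)).
  set (gamOf := fun v => epsilon (inhabits (cpath t)) (Pg v)).
  assert (HgamOf : forall v, In v A1 -> Pg v (gamOf v)) by (intros v Hv; apply epsilon_spec; apply Hloop; auto).
  set (gp := fun v => ppath (ppath (rpath (delta v)) (gamOf v)) (delta (alpha v))).
  assert (Hgp : forall v, In v A1 -> is_path tau (fun _ => True) (gp v) /\ gp v 0 = L v /\ gp v 1 = L (alpha v)).
  { intros v Hv. destruct (HgamOf v Hv) as [Pa [G0 [G1 _]]]. destruct (delta_spec v) as [D1 [D2 D3]].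
    destruct (delta_spec (alpha v)) as [E1 [E2 E3]]. unfold gp. rewrite !ppath_0, ppath_1.
    split; [|split].
    - apply is_path_cat; auto. apply is_path_cat; auto. apply is_path_rev; auto.
      unfold rpath; replace (1-1) with 0 by ring; congruence. rewrite ppath_1; congruence.
    - unfold rpath; replace (1-0) with 1 by ring; auto.
    - auto. }
  set (dec := fun x y : list (X nd) => excluded_middle_informative (x = y)).
  set (A1' := nodup dec A1).
  set (vv := fun i => nth i A1' []).
  set (P := fun i => {| p_n := length (vv i); p_v := L (vv i); p_m := length (alpha (vv i));
                        p_u := L (alpha (vv i)); p_g := gp (vv i) |}).
  assert (HvvA : forall i, (i < length A1')%nat -> In (vv i) A1)
    by (intros i Hi; apply (nodup_In dec); apply nth_In; auto).
  exists (fun xi => LI (g (invL x0 xi))). split.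
  2:{ intros w n. rewrite invL_LI. auto. }
  split.
  - split. intros; apply LI_end.
    exists (fun xi => LI (gi (invL x0 xi))). split. intros; apply LI_end.
    assert (Egig : forall w, gi (g w) = w) by (intros w; apply functional_extensionality; intros n; apply Hgig; auto).
    assert (Eggi : forall w, g (gi w) = w) by (intros w; apply functional_extensionality; intros n; apply Hggi; auto).
    split; [|split; [|split]].
    + intros xi Hxi n. rewrite invL_LI, Egig, LI_invL; auto.
    + intros xi Hxi n. rewrite invL_LI, Eggi, LI_invL; auto.
    + apply cont_conj; auto.
    + apply cont_conj; auto.
  - exists (length A1'), P. split; [|split].
    + intros i Hi. destruct (Hgp (vv i) (HvvA i Hi)) as [G1 [G2 G3]]. simpl.
      destruct (Lam_vertex (vv i)), (Lam_vertex (alpha (vv i))). split; [split; auto|]. split; [split; auto|]. split; [exact G1|]. split; auto.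
    + intros xi Hxi. set (w := invL x0 xi). destruct (proj2 HA1 w) as [v [Hv Hpv]].
      assert (Hv' : In v A1') by (apply nodup_In; auto).
      destruct (In_nth _ _ [] Hv') as [i [Hi Hni]].
      assert (Exi : LI w = xi) by (apply LI_invL; auto).
      exists i. split; auto. split.
      * split; auto. simpl. fold (vv i) in Hni. rewrite Hni, <- Exi. apply LI_len; auto.
      * intros j Hj [_ Hsj]. simpl in Hsj. apply (NoDup_nth A1' []); auto. apply NoDup_nodup.
        fold (vv i) (vv j). fold (vv i) in Hni. rewrite Hni.
        apply (antichain_eq A1 (vv j) v w HA1); auto.
        apply LI_len. rewrite Exi. auto.
    + intros i Hi xi [Hxi Hsi] j. simpl in *. set (v := vv i) in *.
      set (w := invL x0 xi). assert (Exi : LI w = xi) by (apply LI_invL; auto).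
      assert (Hpw : inf_prefix v w) by (apply LI_len; rewrite Exi; auto).
      set (w' := fun q => w (length v + q)%nat).
      assert (Ew : prepend v w' = w) by (apply prepend_drop; auto).
      destruct (HgamOf v (HvvA i Hi)) as [Pg1 [Pg2 [Pg3 Pg4]]].
      destruct (Pg4 w') as [z [Hz1 Hz2]].
      assert (Eg : g w = prepend (alpha v) z) by (apply functional_extensionality; intros q; rewrite <- Ew; auto).
      rewrite Eg, <- Exi, <- Ew. symmetry.
      destruct (Hgp v (HvvA i Hi)) as [G1 [G2 G3]].
      apply S_prepend; auto.
      intros k. rewrite Hz2. rewrite S_ge by lia. rewrite Nat.sub_0_r, Nat.add_0_l.
      destruct (delta_spec v) as [D1 [D2 D3]]. destruct (delta_spec (alpha v)) as [E1 [E2 E3]].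
      destruct (LI_vertex w' k) as [V1 V2].
      destruct (T_spec k (delta v) (LI w' k) D1 V1 ltac:(congruence)) as [U1 U2].
      unfold gp. rewrite T_chain3; auto.
      rewrite T_rev; auto. congruence.
      apply is_path_rev; auto.
      unfold rpath; replace (1-1) with 0 by ring; congruence. congruence.
      unfold rpath; replace (1-0) with 1 by ring; auto.
Qed.

Lemma prefix_inf (a b : list (X nd)) w : word_prefix a b -> inf_prefix b w -> inf_prefix a w.
Proof.
  intros [r ->] H i Hi. rewrite <- H. rewrite nth_error_app1; auto. rewrite length_app; lia.
Qed.

Lemma dir1 (x0 : X nd) h : in_Vf tau M1 f t h ->
  exists g, in_VIMG tau M1 f t ell g /\ forall w n, h (LI w) n = LI (g w) n.
Proof.
  intros [[Hhe [hi [Hhie [Hhih [Hhhi [Ch Chi]]]]]] [k [P [Hpc [Hcover Hpiece]]]]].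
  set (nn := fun i => p_n (P i)). set (vv := fun i => p_v (P i)).
  set (mm := fun i => p_m (P i)). set (uu := fun i => p_u (P i)). set (gg := fun i => p_g (P i)).
  set (aw := fun i => wordOf (nn i) (vv i)). set (bw := fun i => wordOf (mm i) (uu i)).
  assert (Haw : forall i, (i < k)%nat -> length (aw i) = nn i /\ L (aw i) = vv i).
  { intros i Hi. destruct (Hpc i Hi) as [[A B] _]. apply wordOf_spec; auto. }
  assert (Hbw : forall i, (i < k)%nat -> length (bw i) = mm i /\ L (bw i) = uu i).
  { intros i Hi. destruct (Hpc i Hi) as [_ [[A B] _]]. apply wordOf_spec; auto. }
  assert (Hsub : forall i w, (i < k)%nat -> in_subtree_bd M1 f t (nn i) (vv i) (LI w) <-> inf_prefix (aw i) w).
  { intros i w Hi. destruct (Haw i Hi) as [A B]. unfold in_subtree_bd. rewrite <- A, <- B, LI_len.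
    split. tauto. intros; split; auto. apply LI_end. }
  set (ext := fun a : list (X nd) => prepend a (fun _ => x0)).
  assert (Huniq : forall xi i j, (i < k)%nat -> (j < k)%nat -> in_subtree_bd M1 f t (nn i) (vv i) xi ->
                    in_subtree_bd M1 f t (nn j) (vv j) xi -> i = j).
  { intros xi i j Hi Hj Si Sj. destruct (Hcover xi (proj1 Si)) as [l [Hl [_ U]]].
    rewrite (U i Hi Si), (U j Hj Sj). auto. }
  assert (F4 : forall i j, (i < k)%nat -> (j < k)%nat -> word_prefix (aw i) (aw j) -> i = j).
  { intros i j Hi Hj Hp. apply (Huniq (LI (ext (aw j)))); auto; apply Hsub; auto.
    eapply prefix_inf; eauto. apply prepend_prefix. apply prepend_prefix. }
  assert (Hpre : forall i, (i < k)%nat -> forall xi, is_end M1 f t xi -> xi (mm i) = uu i ->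
             exists eta, in_subtree_bd M1 f t (nn i) (vv i) eta /\ h eta = xi).
  { intros i Hi xi Hxi Hxu. destruct (Hpc i Hi) as [Vn [Vm [Gp [G0 G1]]]].
    fold (nn i) (vv i) (mm i) (uu i) (gg i) in Vn, Vm, Gp, G0, G1.
    assert (R0 : rpath (gg i) 0 = xi (mm i)) by (unfold rpath; replace (1-0) with 1 by ring; congruence).
    assert (R1 : rpath (gg i) 1 = vv i) by (unfold rpath; replace (1-1) with 0 by ring; congruence).
    destruct (S_end (mm i) (nn i) (vv i) (rpath (gg i)) xi Hxi Vn (is_path_rev Gp) R0 R1) as [E1 E2].
    exists (S_path tau M1 f (mm i) (nn i) (vv i) (rpath (gg i)) xi). split. split; auto.
    apply functional_extensionality; intros q. rewrite (Hpiece i Hi). 2:{ split; auto. }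
    pose proof (S_rev (mm i) (nn i) (vv i) (rpath (gg i)) xi Hxi Vn (is_path_rev Gp) R0 R1 q) as SR.
    rewrite rpath_rpath, Hxu in SR. auto. }
  assert (F7 : forall i j, (i < k)%nat -> (j < k)%nat -> word_prefix (bw i) (bw j) -> i = j).
  { intros i j Hi Hj Hp. set (xi := LI (ext (bw j))).
    assert (Pj : inf_prefix (bw j) (ext (bw j))) by apply prepend_prefix.
    assert (Pi : inf_prefix (bw i) (ext (bw j))) by (eapply prefix_inf; eauto).
    destruct (Hbw i Hi) as [Bi1 Bi2]. destruct (Hbw j Hj) as [Bj1 Bj2].
    destruct (Hpre i Hi xi (LI_end _)) as [ei [Si Hei]].
    { unfold xi. rewrite <- Bi1, <- Bi2. apply LI_len; auto. }
    destruct (Hpre j Hj xi (LI_end _)) as [ej [Sj Hej]].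
    { unfold xi. rewrite <- Bj1, <- Bj2. apply LI_len; auto. }
    assert (Eij : ei = ej).
    { apply functional_extensionality; intros q. rewrite <- (Hhih ei (proj1 Si) q), <- (Hhih ej (proj1 Sj) q).
      congruence. }
    subst ej. apply (Huniq ei); auto. }
  set (A1 := map aw (seq 0 k)). set (A2 := map bw (seq 0 k)).
  assert (InA1 : forall v, In v A1 <-> exists i, (i < k)%nat /\ aw i = v).
  { intros v. unfold A1. rewrite in_map_iff. split.
    intros [i [E Hi]]; apply in_seq in Hi; exists i; split; auto; lia.
    intros [i [Hi E]]; exists i; split; auto; apply in_seq; lia. }
  assert (InA2 : forall v, In v A2 <-> exists i, (i < k)%nat /\ bw i = v).
  { intros v. unfold A2. rewrite in_map_iff. split.
    intros [i [E Hi]]; apply in_seq in Hi; exists i; split; auto; lia.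
    intros [i [Hi E]]; exists i; split; auto; apply in_seq; lia. }
  set (idx := fun v => epsilon (inhabits 0%nat) (fun i => (i < k)%nat /\ aw i = v)).
  assert (Hidx : forall i, (i < k)%nat -> idx (aw i) = i).
  { intros i Hi. destruct (epsilon_spec (inhabits 0%nat) (fun j => (j < k)%nat /\ aw j = aw i)) as [H1 H2].
    eauto. fold (idx (aw i)) in H1, H2. apply F4; auto. rewrite H2. exists []. rewrite app_nil_r; auto. }
  set (alpha := fun v => bw (idx v)).
  set (g := fun w => invL x0 (h (LI w))).
  exists g. split.
  2:{ intros w n. unfold g. rewrite LI_invL; auto. apply Hhe, LI_end. }
  split.
  { split. auto. exists (fun w => invL x0 (hi (LI w))). split. auto.
    split; [|split; [|split]].
    - intros w _ n. unfold g. rewrite LI_invL by (apply Hhe, LI_end).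
      replace (hi (h (LI w))) with (LI w). rewrite invL_LI; auto.
      apply functional_extensionality; intros q. rewrite Hhih; auto. apply LI_end.
    - intros w _ n. unfold g. rewrite LI_invL by (apply Hhie, LI_end).
      replace (h (hi (LI w))) with (LI w). rewrite invL_LI; auto.
      apply functional_extensionality; intros q. rewrite Hhhi; auto. apply LI_end.
    - apply cont_conj'; auto.
    - apply cont_conj'; auto. }
  exists A1, A2, alpha. split; [|split; [|split; [|split; [|split]]]].
  - split.
    + intros v v' Hv Hv' Hne Hp. apply InA1 in Hv. apply InA1 in Hv'.
      destruct Hv as [i [Hi <-]], Hv' as [j [Hj <-]]. apply Hne. f_equal. apply F4; auto.
    + intros w. destruct (Hcover (LI w) (LI_end w)) as [i [Hi [Si _]]].
      exists (aw i). split. apply InA1; eauto. apply Hsub; auto.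
  - split.
    + intros v v' Hv Hv' Hne Hp. apply InA2 in Hv. apply InA2 in Hv'.
      destruct Hv as [i [Hi <-]], Hv' as [j [Hj <-]]. apply Hne. f_equal. apply F7; auto.
    + intros w. set (xi := LI w). assert (Ex : is_end M1 f t (hi xi)) by (apply Hhie, LI_end).
      destruct (Hcover (hi xi) Ex) as [i [Hi [Si _]]].
      exists (bw i). split. apply InA2; eauto.
      destruct (Hpc i Hi) as [Vn [Vm [Gp [G0 G1]]]].
      destruct Si as [_ Si].
      destruct (S_end (nn i) (mm i) (uu i) (gg i) (hi xi) Ex Vm Gp ltac:(fold (gg i) (nn i) (vv i) in *; congruence) G1) as [_ E2].
      rewrite <- (Hpiece i Hi (hi xi)) in E2 by (split; auto).
      rewrite Hhhi in E2 by apply LI_end.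
      destruct (Hbw i Hi) as [B1 B2]. apply LI_len. rewrite B1, B2. auto.
  - intros v Hv. apply InA1 in Hv. destruct Hv as [i [Hi <-]]. unfold alpha. rewrite Hidx; auto.
    apply InA2; eauto.
  - intros v v' Hv Hv' E. apply InA1 in Hv. apply InA1 in Hv'.
    destruct Hv as [i [Hi <-]], Hv' as [j [Hj <-]]. unfold alpha in E. rewrite !Hidx in E; auto.
    f_equal. apply F7; auto. rewrite E. exists []. rewrite app_nil_r. auto.
  - intros u Hu. apply InA2 in Hu. destruct Hu as [i [Hi <-]]. exists (aw i). split.
    apply InA1; eauto. unfold alpha. rewrite Hidx; auto.
  - intros v Hv. apply InA1 in Hv. destruct Hv as [i [Hi <-]]. unfold alpha. rewrite Hidx by auto.
    destruct (Hpc i Hi) as [Vn [Vm [Gp [G0 G1]]]].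
    fold (nn i) (vv i) (mm i) (uu i) (gg i) in Vn, Vm, Gp, G0, G1.
    destruct (Haw i Hi) as [A1l A1L]. destruct (Hbw i Hi) as [B1l B1L].
    destruct (delta_spec (aw i)) as [D1 [D2 D3]]. destruct (delta_spec (bw i)) as [E1 [E2 E3]].
    set (loop := ppath (ppath (delta (aw i)) (gg i)) (rpath (delta (bw i)))).
    assert (Lp : is_path tau (fun _ => True) loop).
    { apply is_path_cat. apply is_path_cat; auto. congruence. apply is_path_rev; auto.
      rewrite ppath_1. unfold rpath. replace (1-0) with 1 by ring. congruence. }
    assert (L0 : loop 0 = t) by (unfold loop; rewrite !ppath_0; auto).
    assert (L1 : loop 1 = t) by (unfold loop; rewrite ppath_1; unfold rpath; replace (1-1) with 0 by ring; auto).
    exists loop. split; [auto|split; [auto|split; [auto|]]].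
    intros w. set (Xi := S_path tau M1 f 0 0 t loop (LI w)).
    destruct (S_end 0 0 t loop (LI w) (LI_end w) ltac:(split; simpl; auto) Lp ltac:(rewrite L0; auto) L1) as [XE _].
    exists (invL x0 Xi). fold Xi in XE.
    assert (EZ : LI (invL x0 Xi) = Xi) by (apply LI_invL; auto).
    split.
    2:{ intros n. rewrite EZ. auto. }
    intros n. unfold g.
    assert (Hs : in_subtree_bd M1 f t (nn i) (vv i) (LI (prepend (aw i) w))) by (apply Hsub; auto; apply prepend_prefix).
    replace (h (LI (prepend (aw i) w))) with (LI (prepend (bw i) (invL x0 Xi))).
    rewrite invL_LI. auto.
    apply functional_extensionality; intros q. rewrite (Hpiece i Hi _ Hs).
    fold (nn i) (vv i) (mm i) (uu i) (gg i). rewrite <- A1l, <- B1l, <- B1L. symmetry.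
    apply S_prepend; auto. congruence. congruence.
    intros k'. rewrite EZ. unfold Xi. rewrite S_ge by lia. rewrite Nat.sub_0_r, Nat.add_0_l.
    destruct (LI_vertex w k') as [V1 V2].
    destruct (T_spec k' (delta (aw i)) (LI w k') D1 V1 ltac:(congruence)) as [U1 U2].
    destruct (T_spec k' (gg i) _ Gp U1 ltac:(congruence)) as [W1 W2].
    unfold loop. rewrite T_chain3; auto.
    rewrite T_rev2; auto. congruence.
    apply is_path_rev; auto. congruence.
    rewrite G1. unfold rpath. replace (1-0) with 1 by ring. congruence.
    congruence.
Qed.

End All.

End Helpers.

Theorem mainTheorem16 (M : Type) (tau : Topology M) (M1 : M -> Prop)
  (f : M -> M) (t : M) (d : nat) (tpt : X d -> M) (ell : X d -> R -> M)
  (Hcov : partial_self_covering tau M1 f)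
  (Hpc : path_connected tau)
  (Htinj : forall i j, tpt i = tpt j -> i = j)
  (Htfib : forall y, (M1 y /\ f y = t) <-> exists i, tpt i = y)
  (Hell : forall i, is_path tau (fun _ => True) (ell i) /\
                    ell i 0%R = t /\ ell i 1%R = tpt i) :
  (forall h, in_Vf tau M1 f t h ->
     exists g, in_VIMG tau M1 f t ell g /\
       forall w n, h (LamInf tau M1 f t ell w) n = LamInf tau M1 f t ell (g w) n) /\
  (forall g, in_VIMG tau M1 f t ell g ->
     exists h, in_Vf tau M1 f t h /\
       forall w n, h (LamInf tau M1 f t ell w) n = LamInf tau M1 f t ell (g w) n).
Proof.
  destruct (classic (inhabited (X d))) as [[x0]|Hn].
  - split.
    + intros h Hh. eapply Helpers.dir1; eauto.
    + intros g Hg. eapply Helpers.dir2; eauto.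
  - assert (Hw : forall w : nat -> X d, False) by (intros w; apply Hn; exact (inhabits (w 0%nat))).
    assert (He : forall xi, is_end M1 f t xi -> False).
    { intros xi [H0 HS]. destruct (HS 0%nat) as [A B]. rewrite H0 in B.
      destruct (proj1 (Htfib (xi 1%nat)) (conj A B)) as [i _]. apply Hn; exact (inhabits i). }
    split.
    + intros h Hh. exists (fun w => w). split.
      * split.
        { split. auto. exists (fun w => w). split. auto.
          split; [|split; [|split]]; intros w; exfalso; apply (Hw w). }
        exists [[]], [[]], (fun v => v).
        assert (CA : @complete_antichain (X d) [[]]).
        { split. intros v v' Hv Hv' Hne. exfalso. apply Hne.
          destruct Hv as [<-|[]], Hv' as [<-|[]]. auto.
          intros w; exfalso; apply (Hw w). }
        split; [auto|split; [auto|split; [auto|split; [auto|split]]]].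
        { intros u Hu. exists u; split; auto. }
        intros v Hv. exists (fun _ => t). split.
        { split. auto. intros V HV s Hs HVs. exists 1%R. split. apply Rlt_0_1. auto. }
        split; [auto|split; [auto|]]. intros w; exfalso; apply (Hw w).
      * intros w; exfalso; apply (Hw w).
    + intros g Hg. exists (fun xi => xi). split.
      * split.
        { split. auto. exists (fun xi => xi). split. auto.
          split; [|split; [|split]]; intros xi Hxi; exfalso; apply (He xi Hxi). }
        exists 0%nat, (fun _ => {| p_n := 0; p_v := t; p_m := 0; p_u := t; p_g := fun _ => t |}).
        split; [|split].
        { intros i Hi; lia. }
        { intros xi Hxi; exfalso; apply (He xi Hxi). }
        { intros i Hi; lia. }
      * intros w; exfalso; apply (Hw w).
Qed.
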